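(* Let $A$ be a Banach space and let $L$ be a seminorm defined on a dense subspace $\mathrm{dom}(L)$ of $A$ such that $K:=\{a\in \mathrm{dom}(L) : L(a)=0\}$ is finite dimensional, and such that the image of $\{a\in \mathrm{dom}(L) : L(a)\leq 1\}$ under the canonical surjection $A\to A/K$ is compact in $A/K$ (with $A/K$ endowed with the quotient norm). Then $A$ is finite dimensional if and only if $\mathrm{dom}(L)=A$. *)

(* Defs.v *)
From HB Require Import structures.
From mathcomp Require Import all_boot all_order all_algebra.
From mathcomp Require Import all_classical all_reals all_analysis.
Set Implicit Arguments. Unset Strict Implicit. Unset Printing Implicit Defensive.
Import Order.TTheory GRing.Theory Num.Theory.
Import numFieldNormedType.Exports.
Local Open Scope classical_set_scope.
Local Open Scope ring_scope.

Section Defs.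
Context {R : realType} {V : normedModType R}.

Definition is_subspace (S : set V) : Prop :=
  S 0 /\ (forall (a : R) (x y : V), S x -> S y -> S (a *: x + y)).

(* L is a seminorm on the subspace D (its values off D are irrelevant) *)
Definition seminorm_on (D : set V) (L : V -> R) : Prop :=
  (forall x y, D x -> D y -> L (x + y) <= L x + L y) /\
  (forall (a : R) x, D x -> L (a *: x) = `|a| * L x).

Definition fin_dim (S : set V) : Prop :=
  exists (n : nat) (v : 'I_n -> V), (forall i, S (v i)) /\
    (forall x, S x -> exists c : 'I_n -> R, x = \sum_(i < n) c i *: v i).

(* quotient norm of the class of x in V/K : inf_{k in K} |x - k| *)
Definition qnorm (K : set V) (x : V) : R := inf [set `|x - k| | k in K].

(* open sets of V/K, pulled back along the canonical surjection V -> V/K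
   (V/K carrying the topology of the quotient norm) *)
Definition qopen (K : set V) (U : set V) : Prop :=
  forall x, U x -> exists2 e : R, 0 < e & forall y, qnorm K (y - x) < e -> U y.

(* the image of B under V -> V/K is compact in the normed space V/K:
   every cover of it by open subsets of V/K has a finite subcover
   (stated for the preimages in V of those open sets) *)
Definition qcompact (K : set V) (B : set V) : Prop :=
  forall (I : Type) (U : I -> set V), (forall i, qopen K (U i)) ->
    B `<=` \bigcup_i U i ->
    exists F : set I, finite_set F /\ B `<=` \bigcup_(i in F) U i.

End Defs.

(* Main.v *)
Require Import Defs.
From HB Require Import structures.
From mathcomp Require Import all_boot all_order all_algebra.
From mathcomp Require Import all_classical all_reals all_analysis.
From mathcomp Require Import ring lra.
Import Order.TTheory GRing.Theory Num.Theory.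
Import numFieldNormedType.Exports.
Local Open Scope classical_set_scope.
Local Open Scope ring_scope.
Section Aux.
Context {R : realType} {V : normedModType R}.

Lemma closedP (E : set V) :
  closed E <-> (forall x, (forall e, 0 < e -> exists y, E y /\ `|x - y| < e) -> E x).
Proof.
split.
- move=> cE x H; apply: cE => B /nbhs_ballP [e e0 sB].
  have [y [Ey xy]] := H e e0; exists y; split => //; apply: sB.
  by rewrite -ball_normE /ball_ /=.
- move=> H x clx; apply: H => e e0.
  have [y [Ey By]] : E `&` ball x e !=set0.
    by apply: clx; apply/nbhs_ballP; exists e.
  by exists y; split => //; move: By; rewrite -ball_normE.
Qed.

Lemma subsub (x a b : V) : (x - a) - (x - b) = b - a.
Proof. by rewrite opprB addrC addrA subrK. Qed.

Lemma subD (S : set V) : is_subspace S -> forall x y, S x -> S y -> S (x + y).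
Proof. by case=> _ H x y Sx Sy; have := H 1 x y Sx Sy; rewrite scale1r. Qed.
Lemma subZ (S : set V) : is_subspace S -> forall a x, S x -> S (a *: x).
Proof. by case=> S0 H a x Sx; have := H a x 0 Sx S0; rewrite addr0. Qed.
Lemma subB (S : set V) : is_subspace S -> forall x y, S x -> S y -> S (x - y).
Proof. by move=> sS x y Sx Sy; apply: subD => //; rewrite -scaleN1r; apply: subZ. Qed.

Fixpoint spanl (s : seq V) : set V :=
  match s with
  | [::] => [set 0]
  | v :: s' => [set x | exists t y, spanl s' y /\ x = t *: v + y]
  end.

Lemma spanl_sub s : is_subspace (spanl s).
Proof.
elim: s => [|v s [S0 IH]] /=.
  by split => // a x y -> ->; rewrite scaler0 addr0.
split; first by exists 0, 0; split => //; rewrite scale0r addr0.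
move=> a x y [t [u [su ->]]] [t' [u' [su' ->]]].
exists (a * t + t'), (a *: u + u'); split; first exact: IH.
by rewrite scalerDr scalerA addrACA -scalerDl.
Qed.

Lemma spanl_mem s v : v \in s -> spanl s v.
Proof.
elim: s => [//|w s IH]; rewrite inE => /orP [/eqP ->|vs] /=.
  by exists 1, 0; split; [|rewrite scale1r addr0]; case: (spanl_sub s).
by exists 0, v; split; [exact: IH|rewrite scale0r add0r].
Qed.

Lemma spanl_min (D : set V) s : is_subspace D -> (forall v, v \in s -> D v) ->
  spanl s `<=` D.
Proof.
move=> sD; elim: s => [_ x /= ->|v s IH Hv x /= [t [y [sy ->]]]].
  by case: sD.
apply: subD => //; first by apply: subZ => //; apply: Hv; rewrite inE eqxx.
by apply: IH => // u us; apply: Hv; rewrite inE us orbT.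
Qed.

Lemma line_closed (D : set V) v : is_subspace D -> closed D ->
  closed [set x | exists t y, D y /\ x = t *: v + y].
Proof.
move=> sD cD; have [Dv|nDv] := pselect (D v).
  apply/closedP => x Hx; exists 0, x; split; last by rewrite scale0r add0r.
  apply/(closedP D).1 => // e e0; have [z [[t [y [Dy ->]]] xz]] := Hx e e0.
  by exists (t *: v + y); split => //; apply: subD => //; apply: subZ.
have [d d0 Hd] : exists2 d, 0 < d & forall y, D y -> d <= `|v - y|.
  apply: contrapT => H; apply: nDv; apply/(closedP D).1 => // e e0.
  apply: contrapT => H2; apply: H; exists e => // y Dy; rewrite leNgt.
  by apply/negP => lt; apply: H2; exists y.
have key t y : D y -> `|t| * d <= `|t *: v + y|.
  move=> Dy; have [->|t0] := eqVneq t 0; first by rewrite normr0 mul0r.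
  have -> : t *: v + y = t *: (v - (- t^-1) *: y).
    by rewrite scaleNr opprK scalerDr scalerA divff // scale1r.
  rewrite normrZ ler_wpM2l //; apply: Hd; apply: subZ => //.
apply/closedP => x Hx.
pose T e := [set t | exists y, D y /\ `|x - (t *: v + y)| < e].
have diam e e' t t' : T e t -> T e' t' -> `|t - t'| * d <= e + e'.
  move=> [y [Dy ty]] [y' [Dy' ty']].
  apply: (le_trans (key _ (y - y') _)); first exact: subB.
  have -> : (t - t') *: v + (y - y') = (x - (t' *: v + y')) - (x - (t *: v + y)).
    by rewrite subsub scalerBl opprD addrACA.
  apply: (le_trans (ler_normB _ _)); rewrite addrC; apply: lerD; exact: ltW.
pose S := [set s | exists e t, 0 < e /\ T e t /\ s = t - e / d].
have T_ne e : 0 < e -> exists t, T e t.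
  by move=> e0; have [z [[t [y [Dy ->]]] xz]] := Hx e e0; exists t, y.
have ub e' t' : 0 < e' -> T e' t' -> ubound S (t' + e' / d).
  move=> e'0 Tt' s [e [t [e0 [Tt ->]]]].
  have h := diam _ _ _ _ Tt Tt'.
  have h2 : (t - t') * d <= e + e'.
    exact: le_trans (ler_wpM2r (ltW d0) (ler_norm _)) h.
  rewrite -(ler_pM2r d0) !mulrDl !mulNr !divfK ?gt_eqF //.
  rewrite mulrBl in h2; lra.
have [t0 Tt0] := T_ne 1 ltr01.
have hsS : has_sup S.
  split; first by exists (t0 - 1 / d), 1, t0.
  by exists (t0 + 1 / d); apply: ub.
have hs e' t' : 0 < e' -> T e' t' -> `|sup S - t'| <= e' / d.
  move=> e'0 Tt'.
  have h1 : sup S <= t' + e' / d by apply: ge_sup; [case: hsS|apply: ub].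
  have h2 : t' - e' / d <= sup S by apply: sup_upper_bound => //; exists e', t'.
  rewrite ler_norml; apply/andP; split; lra.
have hD : D (x - sup S *: v).
  apply/(closedP D).1 => // eps eps0.
  have dv : 0 < d + `|v| by have := normr_ge0 v; lra.
  pose e' := eps * d / (2 * (d + `|v|)).
  have e'0 : 0 < e' by rewrite /e' divr_gt0 ?mulr_gt0.
  have [t' Tt'] := T_ne e' e'0.
  have [y [Dy ht']] := Tt'.
  exists y; split => //.
  have -> : x - sup S *: v - y = (x - (t' *: v + y)) + (t' - sup S) *: v.
    by rewrite scalerBl opprD !addrA (addrAC x (- (t' *: v))) subrK addrAC.
  apply: (le_lt_trans (ler_normD _ _)); rewrite normrZ.
  have h1 := hs _ _ e'0 Tt'; rewrite distrC in h1.
  have h2 : `|t' - sup S| * `|v| <= e' / d * `|v| := ler_wpM2r (normr_ge0 _) h1.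
  have h3 : e' + e' / d * `|v| = eps / 2.
    rewrite /e'; field; apply/andP; split; rewrite ?gt_eqF //.
  lra.
by exists (sup S), (x - sup S *: v); split => //; rewrite addrC subrK.
Qed.

Lemma spanl_closed s : closed (spanl s).
Proof.
elim: s => [|v s IH] /=; last by apply: line_closed => //; exact: spanl_sub.
apply/closedP => x Hx; apply/eqP; rewrite -normr_eq0; apply/eqP.
apply: contrapT => nx.
have x0 : 0 < `|x| by rewrite lt_def normr_ge0 andbT; apply/eqP.
by have [y [/= -> ]] := Hx _ x0; rewrite subr0 ltxx.
Qed.

Lemma sub_spanl (s : seq V) : forall D : set V, is_subspace D -> D `<=` spanl s ->
  exists w : seq V, (forall u, u \in w -> D u) /\ D = spanl w.
Proof.
elim: s => [|v s IH] D sD Ds.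
  exists [::]; split => //; rewrite predeqE => x; split; first exact: Ds.
  by move=> /= ->; case: sD.
have sD' : is_subspace (D `&` spanl s).
  have [S0 SH] := spanl_sub s; case: sD => D0 DH.
  by split => // a x y [Dx sx] [Dy sy]; split; [apply: DH|apply: SH].
have [w' [w'D' eD']] := IH _ sD' (@subIsetr _ _ _).
have [Dss | ] := pselect (D `<=` spanl s).
  exists w'; split; first by move=> u /w'D' [].
  by rewrite -eD' setIidl.
move=> /existsNP [d0 /not_implyP [Dd0 nd0]].
have [c [y0 [sy0 d0E]]] := Ds _ Dd0.
have c0 : c != 0.
  by apply/negP => /eqP c0; apply: nd0; rewrite d0E c0 scale0r add0r.
exists (d0 :: w'); split.
  by move=> u; rewrite inE => /orP [/eqP -> //| /w'D' []].
rewrite predeqE => x; split.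
  move=> Dx; have [c' [y [sy xE]]] := Ds _ Dx.
  exists (c' / c), (x - (c' / c) *: d0); split; last by rewrite addrC subrK.
  rewrite -eD'; split; first by apply: subB => //; apply: subZ.
  have -> : x - c' / c *: d0 = y - (c' / c) *: y0.
    rewrite xE d0E scalerDr scalerA divfK // opprD addrA.
    by rewrite (addrAC _ y) subrr add0r.
  by apply: subB; [exact: spanl_sub| |apply: subZ; [exact: spanl_sub|]].
move=> /= [t [u [su ->]]]; apply: subD => //; first exact: subZ.
by rewrite -eD' in su; case: su.
Qed.

Lemma sum_in_sub (S : set V) n (v : 'I_n -> V) (c : 'I_n -> R) :
  is_subspace S -> (forall i, S (v i)) -> S (\sum_(i < n) c i *: v i).
Proof.
move=> sS Sv; apply: (big_ind S); first by case: sS.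
  exact: subD.
by move=> i _; apply: subZ.
Qed.

Lemma spanl_sum s x : spanl s x ->
  exists c : 'I_(size s) -> R, x = \sum_(i < size s) c i *: s`_i.
Proof.
elim: s x => [|v s IH] x /=.
  by move=> ->; exists (fun _ => 0); rewrite big_ord0.
move=> [t [y [sy ->]]]; have [c' ->] := IH _ sy.
exists (fun i : 'I_(size s).+1 => if unlift ord0 i is Some j then c' j else t).
rewrite big_ord_recl /= unlift_none; congr (_ + _).
by apply: eq_bigr => i _; rewrite liftK.
Qed.

Lemma fin_dim_spanl (S : set V) : is_subspace S -> fin_dim S ->
  exists s, (forall u, u \in s -> S u) /\ S = spanl s.
Proof.
move=> sS [n [v [Sv Hv]]]; exists [seq v i | i <- enum 'I_n]; split.
  by move=> u /mapP [i _ ->].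
rewrite predeqE => x; split; last first.
  apply: spanl_min => // u /mapP [i _ ->]; exact: Sv.
move=> /Hv [c ->]; apply: sum_in_sub; first exact: spanl_sub.
by move=> i; apply: spanl_mem; apply: map_f; rewrite mem_enum.
Qed.

Lemma closed_dense (D : set V) : closed D -> dense D -> D = setT.
Proof.
move=> cD dD; rewrite predeqE => x; split => // _.
apply/(closedP D).1 => // e e0.
have [y [bxy Dy]] : ball x e `&` D !=set0.
  by apply: dD; [exists x; exact: ballxx|exact: ball_open].
by exists y; split => //; move: bxy; rewrite -ball_normE.
Qed.

End Aux.

Section Quot.
Context {R : realType} {V : normedModType R} (K : set V).
Hypothesis sK : is_subspace K.

Let ne x : [set `|x - k| | k in K] !=set0.
Proof. by exists `|x - 0|, 0 => //; case: sK. Qed.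
Let lb x : has_lbound [set `|x - k| | k in K].
Proof. by exists 0 => y [k _ <-]. Qed.

Lemma qnorm_ge0 x : 0 <= qnorm K x.
Proof. by apply: lb_le_inf => // y [k _ <-]. Qed.

Lemma qnorm_le x k : K k -> qnorm K x <= `|x - k|.
Proof. by move=> Kk; apply: ge_inf => //; exists k. Qed.

Lemma qnorm_lt x e : qnorm K x < e -> exists k, K k /\ `|x - k| < e.
Proof. by move=> /(inf_lt (ne x)) [y [k Kk <-] h]; exists k. Qed.

Lemma qnorm_leN x : qnorm K x <= `|x|.
Proof. by rewrite -[X in `|X|]subr0; apply: qnorm_le; case: sK. Qed.

Lemma qnormD a b : qnorm K (a + b) <= qnorm K a + qnorm K b.
Proof.
apply/ler_addgt0Pr => e e0.
have [k1 [K1 h1]] : exists k, K k /\ `|a - k| < qnorm K a + e / 2.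
  by apply: qnorm_lt; rewrite ltrDl; exact: divr_gt0.
have [k2 [K2 h2]] : exists k, K k /\ `|b - k| < qnorm K b + e / 2.
  by apply: qnorm_lt; rewrite ltrDl; exact: divr_gt0.
have := qnorm_le (a + b) (k1 + k2) (@subD _ _ K sK _ _ K1 K2).
move=> hq. apply: (le_trans hq).
have -> : a + b - (k1 + k2) = (a - k1) + (b - k2) by rewrite opprD addrACA.
apply: (le_trans (ler_normD _ _)); lra.
Qed.

Lemma qnorm_tri x y z : qnorm K (x - z) <= qnorm K (x - y) + qnorm K (y - z).
Proof. by have := qnormD (x - y) (y - z); rewrite addrA subrK. Qed.

Lemma qnorm0_in x : closed K -> qnorm K x = 0 -> K x.
Proof.
move=> cK q0; apply/(closedP K).1 => // e e0.
by apply: qnorm_lt; rewrite q0.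
Qed.

End Quot.

Theorem theorem2p1 (R : realType) (A : completeNormedModType R)
    (D : set A) (L : A -> R) :
  is_subspace D -> dense D -> seminorm_on D L ->
  fin_dim [set a | D a /\ L a = 0] ->
  qcompact [set a | D a /\ L a = 0] [set a | D a /\ L a <= 1] ->
  (fin_dim [set: A] <-> D = [set: A]).
Proof.
move=> sD dD [Ltri Lhom] fK cB; split.
  move=> fA.
  have [s [_ Es]] := @fin_dim_spanl _ _ [set: A] ltac:(by split) fA.
  have [w [_ Dw]] := @sub_spanl _ _ s D sD ltac:(by rewrite -Es).
  by rewrite Dw in dD *; apply: closed_dense => //; exact: spanl_closed.
move=> DT; subst D.
set K := [set a | [set: A] a /\ L a = 0] in fK cB *.
set B := [set a | [set: A] a /\ L a <= 1] in cB *.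
have LZ a x : L (a *: x) = `|a| * L x by exact: Lhom.
have L0 : L 0 = 0 by have := LZ 0 0; rewrite scale0r normr0 mul0r.
have LN x : L (- x) = L x by rewrite -scaleN1r LZ normrN normr1 mul1r.
have Lge0 x : 0 <= L x.
  by have := Ltri x (- x) I I; rewrite subrr L0 LN; lra.
have sK : is_subspace K.
  split; first by split.
  move=> a x y [_ Lx] [_ Ly]; split => //; apply/eqP; rewrite eq_le Lge0 andbT.
  by have := Ltri (a *: x) y I I; rewrite LZ Lx Ly mulr0 addr0.
have [kb [_ Kkb]] := @fin_dim_spanl _ _ K sK fK.
have cK : closed K by rewrite Kkb; exact: spanl_closed.
have LK x k : K k -> L (x + k) <= L x.
  by move=> [_ Lk]; have := Ltri x k I I; rewrite Lk addr0.
have Bopen x : 1 < L x -> exists2 r, 0 < r & forall y, `|x - y| < r -> 1 < L y.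
  move=> Lx.
  have qpos b : L b <= 1 -> 0 < qnorm K (x - b).
    move=> Lb; rewrite lt_def (qnorm_ge0 K sK) andbT; apply/eqP => q0.
    have Kxb := qnorm0_in K sK _ cK q0.
    by have := LK b (x - b) Kxb; rewrite addrC subrK => h; lra.
  pose U (m : nat) := [set y | m.+1%:R^-1 < qnorm K (x - y)].
  have Uo m : qopen K (U m).
    move=> y Uy; exists (qnorm K (x - y) - m.+1%:R^-1); first by rewrite subr_gt0.
    move=> z hz; have h := qnorm_tri K sK x z y.
    move: Uy; rewrite /U /= => Uy.
    set a1 := qnorm K (x - y) in hz h Uy *; set a2 := qnorm K (z - y) in hz h *.
    set a3 := qnorm K (x - z) in h *; set c := m.+1%:R^-1 in hz Uy *; lra.
  have cov : B `<=` \bigcup_m U m.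
    move=> b [_ Lb]; have qb := qpos b Lb.
    exists (Num.Def.trunc (qnorm K (x - b))^-1) => //; rewrite /U /=.
    rewrite -[X in _ < X](invrK (qnorm K (x - b))) ltf_pV2 ?posrE ?ltr0Sn ?invr_gt0 //.
    exact: truncnS_gt.
  have [F [fF FU]] := cB nat U Uo cov.
  have [sF' sFE'] := (finite_seqP F).1 fF.
  pose M := (\max_(i <- sF') i)%N.
  exists (M.+1%:R^-1); first by rewrite invr_gt0 ltr0Sn.
  move=> y xy; rewrite ltNge; apply/negP => Ly.
  have [i Fi Ui] := FU y (conj I Ly).
  have iM : (i <= M)%N.
    by apply: (@leq_bigmax_seq _ _ xpredT (fun j => j)); rewrite sFE' in Fi.
  have h1 : qnorm K (x - y) <= `|x - y| := qnorm_leN K sK _.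
  have h2 : M.+1%:R^-1 <= i.+1%:R^-1 :> R.
    by rewrite lef_pV2 ?posrE ?ltr0Sn // ler_nat ltnS.
  move: Ui; rewrite /U /= => Ui.
  set c1 := M.+1%:R^-1 in h2 xy; set c2 := i.+1%:R^-1 in h2 Ui; lra.
have Fopen c x : 0 < c -> c < L x ->
    exists2 r, 0 < r & forall y, `|x - y| < r -> c < L y.
  move=> c0 h.
  have cx : 1 < L (c^-1 *: x).
    by rewrite LZ gtr0_norm ?invr_gt0 // -(ltr_pM2l c0) mulr1 mulrA divff ?gt_eqF // mul1r.
  have [r r0 Hr] := Bopen _ cx; exists (c * r); first exact: mulr_gt0.
  move=> y xy; have := Hr (c^-1 *: y).
  rewrite -scalerBr normrZ gtr0_norm ?invr_gt0 // mulrC ltr_pdivrMr // mulrC.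
  move=> /(_ xy); rewrite LZ gtr0_norm ?invr_gt0 // => h1.
  have -> : L y = c * (c^-1 * L y) by rewrite mulrA divff ?gt_eqF // mul1r.
  by rewrite -{1}[c]mulr1 ltr_pM2l.
have Fclosed (n : nat) : closed [set x | L x <= n.+1%:R].
  apply/closedP => x Hx /=; rewrite leNgt; apply/negP => h.
  have [r r0 Hr] := Fopen _ _ (ltr0Sn _ n) h.
  have [y [Ly xy]] := Hx r r0; have := Hr y xy; rewrite /= in Ly; lra.
pose O n := ~` [set x | L x <= n.+1%:R].
have Oo n : open (O n) by rewrite openC; exact: Fclosed.
have O_empty : \bigcap_n O n = set0.
  rewrite -subset0 => x /(_ (Num.Def.trunc (L x)) I) /=; apply.
  by apply: ltW; exact: truncnS_gt.
have [n nd] : exists n, ~ dense (O n).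
  apply: contrapT => H.
  have dd : dense (\bigcap_n O n).
    apply: Baire => n; split => //; apply: contrapT => nd; apply: H; by exists n.
  rewrite O_empty in dd.
  have [z [_ []]] := dd setT ltac:(by exists 0) openT.
have [W0 [[x0 /open_nbhs_nbhs /nbhs_ballP [r r0 bxr]] W0O]] := denseNE nd.
have Fb y : `|x0 - y| < r -> L y <= n.+1%:R.
  move=> h; apply: contrapT => ny.
  have : (W0 `&` O n) y by split; [apply: bxr; rewrite -ball_normE|exact: ny].
  by rewrite W0O.
have L0b y : `|y| < r -> L y <= n.+1%:R.
  move=> hy.
  have h1 : L (x0 + y) <= n.+1%:R.
    by apply: Fb; rewrite opprD addrA subrr sub0r normrN.
  have h2 : L (x0 - y) <= n.+1%:R.
    by apply: Fb; rewrite opprB addrCA subrr addr0.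
  have h3 := Ltri (x0 + y) (- (x0 - y)) I I.
  rewrite LN opprB addrC addrA subrK -mulr2n -scaler_nat LZ normr_nat in h3.
  set N := n.+1%:R in h1 h2 *; lra.
pose N : R := n.+1%:R.
have N0 : 0 < N by rewrite /N ltr0Sn.
pose mu := r / N.
have mu0 : 0 < mu by rewrite /mu divr_gt0.
have Bmu y : `|y| < mu -> L y <= 1.
  move=> hy; have := L0b (N *: y).
  rewrite normrZ gtr0_norm // LZ gtr0_norm //.
  have -> : N * `|y| < r by rewrite mulrC -ltr_pdivlMr.
  move=> /(_ isT) h; rewrite -(ler_pM2l N0) mulr1; exact: h.
pose rho := mu / 4.
have rho0 : 0 < rho by rewrite /rho divr_gt0.
pose U' (b : A) := [set y | qnorm K (y - b) < rho].
have U'o b : qopen K (U' b).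
  move=> y Uy; exists (rho - qnorm K (y - b)); first by rewrite subr_gt0.
  move=> z hz; have h := qnorm_tri K sK z y b; rewrite /U' /=.
  move: Uy; rewrite /U' /= => Uy; lra.
have cov : B `<=` \bigcup_b U' b.
  move=> b _; exists b => //; rewrite /U' /= subrr.
  by apply: (le_lt_trans (qnorm_leN K sK 0)); rewrite normr0.
have [F [fF FU]] := cB A U' U'o cov.
have [sa saE] := (finite_seqP F).1 fF.
pose W := spanl (sa ++ kb).
have sW : is_subspace W := spanl_sub _.
have KW : K `<=` W.
  rewrite Kkb; apply: spanl_min => // u ukb; apply: spanl_mem.
  by rewrite mem_cat ukb orbT.
have aW u : u \in sa -> W u.
  by move=> ua; apply: spanl_mem; rewrite mem_cat ua.
have step y : exists w, W w /\ `|y - w| <= `|y| / 2.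
  have [->|y0] := eqVneq y 0.
    by exists 0; split; [case: sW|rewrite subr0 normr0 mul0r].
  have ny0 : 0 < `|y| by rewrite normr_gt0.
  pose s := 2 * `|y| / mu.
  have s0 : 0 < s by rewrite /s divr_gt0 // mulr_gt0.
  have hy' : `|s^-1 *: y| < mu.
    rewrite normrZ gtr0_norm ?invr_gt0 //.
    have -> : s^-1 * `|y| = mu / 2.
      by rewrite /s; field; rewrite ?gt_eqF //; apply/andP; split; rewrite gt_eqF.
    lra.
  have [b Fb0 Ub] := FU _ (conj I (Bmu _ hy')).
  have [k [Kk hk]] := qnorm_lt K sK _ _ Ub.
  exists (s *: (b + k)); split.
    apply: subZ => //; apply: subD => //; last exact: KW.
    by apply: aW; rewrite saE in Fb0.
  have -> : y - s *: (b + k) = s *: (s^-1 *: y - b - k).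
    by rewrite -addrA -opprD scalerBr scalerA divff ?gt_eqF // scale1r.
  rewrite normrZ gtr0_norm //.
  have -> : `|y| / 2 = s * rho by rewrite /s /rho /mu; field; rewrite ?gt_eqF.
  by rewrite ler_pM2l // ltW.
have iter x k : exists w, W w /\ `|x - w| <= `|x| / 2 ^+ k.
  elim: k => [|k [w [Ww hw]]].
    by exists 0; split; [case: sW|rewrite subr0 expr0 divr1].
  have [w' [Ww' hw']] := step (x - w).
  exists (w + w'); split; first exact: subD.
  rewrite opprD addrA exprSr invfM mulrA.
  apply: (le_trans hw'); rewrite ler_pM2r //.
have WT : W = setT.
  rewrite predeqE => x; split => // _.
  apply/(closedP W).1; first exact: spanl_closed.
  move=> e e0; pose k := Num.Def.trunc (`|x| / e).
  have [w [Ww hw]] := iter x k; exists w; split => //.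
  apply: (le_lt_trans hw).
  have hk : k.+1%:R <= 2 ^+ k :> R.
    by rewrite -natrX ler_nat; apply: ltn_expl.
  have hk2 : `|x| / e < k.+1%:R by exact: truncnS_gt.
  have p2 : 0 < 2 ^+ k :> R by apply: exprn_gt0.
  rewrite ltr_pdivrMr //; rewrite ltr_pdivrMr // in hk2.
  set N1 := k.+1%:R in hk hk2; set N2 := 2 ^+ k in hk p2 *.
  apply: (lt_le_trans hk2); rewrite mulrC ler_pM2l //.
exists (size (sa ++ kb)), (fun i => (sa ++ kb)`_i); split => // x _.
by apply: spanl_sum; rewrite -/W WT.
Qed.
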